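(* Consider smoothed LocalMaxCut on a graph $G=(V,E)$ with $n=|V|$, $m=|E|$ and maximum degree $\Delta(G)$, where the edge weights $w_e$ are drawn independently from distributions with densities $f_e:[-1,1]\to[0,\phi]$. Then the expected maximum number of iterations of local search under the Flip neighbourhood (over all initial cuts and all improving sequences) is $O(2^{\Delta(G)}nm^2\phi)$.
   Context: LocalMaxCut: given a weighted undirected graph $G=(V,E)$ with weights $w_e$, a cut is a partition $(V_1,V_2)$ of $V$ with weight $\sum_{uv\in E,\,u\in V_1,\,v\in V_2}w_{uv}$; the Flip neighbours of a cut are the cuts obtained by moving a single vertex to the other block; a solution is a cut with no neighbour of strictly larger weight. Local search repeatedly moves to a strictly better neighbour. *)

(* Defs.v *)
From HB Require Import structures.
From mathcomp Require Import all_boot all_order all_algebra.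
From mathcomp Require Import all_classical all_reals all_analysis.
Set Implicit Arguments. Unset Strict Implicit. Unset Printing Implicit Defensive.
Import Order.TTheory GRing.Theory Num.Theory.
Local Open Scope ring_scope.

Definition simple_graph (n : nat) (adj : rel 'I_n) : Prop :=
  symmetric adj /\ irreflexive adj.

(* Edge set: each edge {u,v} represented once as the pair (u,v) with u < v. *)
Definition edges (n : nat) (adj : rel 'I_n) : {set 'I_n * 'I_n} :=
  [set e | adj e.1 e.2 && (e.1 < e.2)%N].

Definition max_degree (n : nat) (adj : rel 'I_n) : nat :=
  \max_(v : 'I_n) #|[set u | adj v u]|.

Definition cut_weight (R : numDomainType) (n : nat) (adj : rel 'I_n)
  (w : 'I_n * 'I_n -> R) (S : {set 'I_n}) : R :=
  \sum_(e in edges adj | (e.1 \in S) != (e.2 \in S)) w e.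

Definition flip (n : nat) (S : {set 'I_n}) (v : 'I_n) : {set 'I_n} :=
  if v \in S then S :\ v else v |: S.

Definition improving_step (R : numDomainType) (n : nat) (adj : rel 'I_n)
  (w : 'I_n * 'I_n -> R) : rel {set 'I_n} :=
  fun S S' => [exists v, S' == flip S v] && (cut_weight adj w S < cut_weight adj w S').

(* Any improving sequence of k steps visits k+1
   distinct cuts (weights strictly increase), so k < 2^n and the bounded max
   below is the true maximum. *)
Definition max_flip_iterations (R : numDomainType) (n : nat) (adj : rel 'I_n)
  (w : 'I_n * 'I_n -> R) : nat :=
  \max_(k < (2 ^ n).+1 | [exists S0 : {set 'I_n},
         [exists s : k.-tuple {set 'I_n}, path (improving_step adj w) S0 s]]) k.

Local Open Scope classical_set_scope.
Local Open Scope ereal_scope.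

(* Mutual independence of the random variables X i, i in J (J finite):
   product rule for every choice of measurable sets (taking A i = setT
   recovers every subfamily). *)
Definition mutually_independent d (Omega : measurableType d) (R : realType)
  (P : probability Omega R) (I : finType) (J : {set I}) (X : I -> Omega -> R) : Prop :=
  forall A : I -> set R, (forall i, measurable (A i)) ->
    P (\big[setI/setT]_(i in J) (X i @^-1` A i)) = \prod_(i in J) P (X i @^-1` A i).

Definition has_density_on_pm1 d (Omega : measurableType d) (R : realType)
  (P : probability Omega R) (X : Omega -> R) (f : R -> R) : Prop :=
  forall A : set R, measurable A ->
    P (X @^-1` A) =
    \int[lebesgue_measure]_(x in A `&` [set x : R | (-1 <= x <= 1)%R]) (f x)%:E.

(* Main.v *)
Require Import Defs.
From HB Require Import structures.
From mathcomp Require Import all_boot all_order all_algebra.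
From mathcomp Require Import all_classical all_reals all_analysis.
From mathcomp Require Import lra ring measurable_realfun.
Import Order.TTheory GRing.Theory Num.Theory.
Local Open Scope ring_scope.

Module Helpers.
Set Implicit Arguments. Unset Strict Implicit. Unset Printing Implicit Defensive.
Local Open Scope classical_set_scope.

Definition inc n (adj : rel 'I_n) (v : 'I_n) : {set 'I_n * 'I_n} :=
  [set e in edges adj | (e.1 == v) || (e.2 == v)].
Definition gain (R : numDomainType) n (adj : rel 'I_n) (w : 'I_n * 'I_n -> R) v
  (D : {set 'I_n * 'I_n}) : R :=
  \sum_(e in inc adj v) (if e \in D then - w e else w e).
Definition cutE n (adj : rel 'I_n) (S : {set 'I_n}) : {set 'I_n * 'I_n} :=
  [set e in edges adj | (e.1 \in S) != (e.2 \in S)].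

Section Det.
Variables (R : realType) (n : nat) (adj : rel 'I_n) (w : 'I_n * 'I_n -> R).

Lemma cut_weightE (S : {set 'I_n}) : cut_weight adj w S =
  \sum_(e in edges adj) (if (e.1 \in S) != (e.2 \in S) then w e else 0).
Proof. by rewrite /cut_weight big_mkcondr. Qed.

Lemma in_flip (S : {set 'I_n}) (v x : 'I_n) : (x \in flip S v) = (if x == v then x \notin S else x \in S).
Proof.
rewrite /flip; case: ifP => vS; rewrite ?inE; case: eqP => // ->; by rewrite vS.
Qed.

Lemma flip_gain (S : {set 'I_n}) (v : 'I_n) : cut_weight adj w (flip S v) =
  cut_weight adj w S + gain adj w v (cutE adj S).
Proof.
rewrite !cut_weightE /gain.
have -> : \sum_(e in inc adj v) (if e \in cutE adj S then - w e else w e) =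
  \sum_(e in edges adj) (if (e.1 == v) || (e.2 == v) then
     (if (e.1 \in S) != (e.2 \in S) then - w e else w e) else 0).
  rewrite -big_mkcondr /=; apply: eq_big => e; first by rewrite inE.
  by rewrite inE => /andP[eE _]; rewrite inE eE.
rewrite -big_split /=; apply: eq_bigr => e; rewrite inE => /andP[_ lt12].
have ne12 : e.1 != e.2 by rewrite neq_ltn lt12.
rewrite !in_flip.
case: (eqVneq e.1 v) => [h1|h1]; case: (eqVneq e.2 v) => [h2|h2] /=.
- by move: ne12; rewrite h1 h2 eqxx.
- by case: (e.1 \in S); case: (e.2 \in S) => /=; rewrite ?add0r ?addr0 ?subrr.
- by case: (e.1 \in S); case: (e.2 \in S) => /=; rewrite ?add0r ?addr0 ?subrr.
- by rewrite addr0.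
Qed.

Lemma path_gain eps S0 s :
  (forall v D, ~~ ((0 < gain adj w v D) && (gain adj w v D <= eps))) ->
  path (improving_step adj w) S0 s ->
  cut_weight adj w S0 + (size s)%:R * eps <= cut_weight adj w (last S0 s).
Proof.
move=> ng; elim: s S0 => [|S1 s IH] S0 /=; first by rewrite mul0r addr0.
case/andP=> /andP[/existsP[v /eqP ->] lt01] /IH.
rewrite flip_gain in lt01 *.
have gp : 0 < gain adj w v (cutE adj S0) by rewrite -(ltrD2l (cut_weight adj w S0)) addr0.
have ge : eps < gain adj w v (cutE adj S0).
  by move: (ng v (cutE adj S0)); rewrite gp /= -ltNge.
apply: le_trans; rewrite -addn1 natrD mulrDl mul1r.
have := ltW ge; lra.
Qed.

Lemma cw_bound (S : {set 'I_n}) : (forall e, e \in edges adj -> -1 <= w e <= 1) ->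
  - (#|edges adj|%:R) <= cut_weight adj w S <= #|edges adj|%:R.
Proof.
move=> wb; rewrite cut_weightE; apply/andP; split.
  rewrite -sumr_const -sumrN; apply: ler_sum => e eE.
  by case: ifP => _; [case/andP: (wb e eE)|rewrite lerN10].
rewrite -sumr_const; apply: ler_sum => e eE.
by case: ifP => _; [case/andP: (wb e eE)|].
Qed.

Lemma iter_bound eps k S0 (s : seq {set 'I_n}) :
  (forall e, e \in edges adj -> -1 <= w e <= 1) ->
  (forall v D, ~~ ((0 < gain adj w v D) && (gain adj w v D <= eps))) ->
  size s = k -> path (improving_step adj w) S0 s -> k%:R * eps <= 2 * #|edges adj|%:R.
Proof.
move=> wb ng <- /(path_gain ng) h.
have /andP[a _] := cw_bound S0 wb; have /andP[_ b] := cw_bound (last S0 s) wb.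
rewrite -(lerD2l (cut_weight adj w S0)); apply: le_trans h _.
rewrite mulr2n; lra.
Qed.

End Det.

Section Det2.
Variables (R : realType) (n : nat) (adj : rel 'I_n) (w : 'I_n * 'I_n -> R).

Lemma mfi_le : (max_flip_iterations adj w <= 2 ^ n)%N.
Proof. by apply/bigmax_leqP => k _; rewrite -ltnS. Qed.

Lemma mfi_witness j : (2 ^ j <= max_flip_iterations adj w)%N ->
  exists k S0 (s : seq {set 'I_n}), [/\ (2 ^ j <= k)%N, size s = k &
     path (improving_step adj w) S0 s].
Proof.
rewrite /max_flip_iterations.
case: (boolP [exists k : 'I_(2 ^ n).+1, (2 ^ j <= k)%N && [exists S0 : {set 'I_n},
         [exists s : k.-tuple {set 'I_n}, path (improving_step adj w) S0 s]]]).
  case/existsP=> k /andP[jk /existsP[S0 /existsP[s ps]]] _.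
  by exists k, S0, s; rewrite size_tuple.
move=> /negP nex h; exfalso; apply: nex.
have : ~~ (\max_(k < (2 ^ n).+1 | [exists S0 : {set 'I_n},
         [exists s : k.-tuple {set 'I_n}, path (improving_step adj w) S0 s]]) k <= (2 ^ j).-1)%N.
  by rewrite -ltnNge (leq_trans _ h) // prednK // expn_gt0.
apply: contraR => /existsPn H; apply/bigmax_leqP => k Pk.
have := H k; rewrite Pk andbT -ltnNge => kj.
by rewrite -ltnS prednK // expn_gt0.
Qed.

Lemma dyadic M T : (T < 2 ^ M)%N -> (T <= \sum_(j < M) 2 ^ j * (2 ^ j <= T))%N.
Proof.
elim: M => [|M IH] TM; first by move: TM; rewrite expn0 ltnS leqn0 => /eqP ->.
rewrite big_ord_recr /=.
case: (leqP (2 ^ M) T) => hT; last first.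
  by apply: leq_trans (IH hT) _; rewrite leq_addr.
have -> : (\sum_(j < M) 2 ^ j * (2 ^ j <= T) = \sum_(j < M) 2 ^ j)%N.
  apply: eq_bigr => j _; rewrite (leq_trans _ hT) ?muln1 //.
  by rewrite leq_exp2l // ltnW.
have s : ((\sum_(j < M) 2 ^ j).+1 = 2 ^ M)%N.
  elim: M {IH TM hT} => [|M IH]; first by rewrite big_ord0.
  by rewrite big_ord_recr /= -addSn IH expnS mul2n addnn.
rewrite muln1; move: TM; rewrite expnS mul2n -addnn -{1}s addSn ltnS.
done.
Qed.

Lemma no_long eps j :
  (forall e, e \in edges adj -> -1 <= w e <= 1) ->
  (forall v D, ~~ ((0 < gain adj w v D) && (gain adj w v D <= eps))) ->
  0 < eps -> 2 * #|edges adj|%:R < (2 ^ j)%:R * eps ->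
  ~~ (2 ^ j <= max_flip_iterations adj w)%N.
Proof.
move=> wb ng ep lt; apply/negP => /mfi_witness [k [S0 [s [jk sk ps]]]].
have := iter_bound wb ng sk ps.
have : (2 ^ j)%:R * eps <= k%:R * eps by rewrite ler_pM2r // ler_nat.
lra.
Qed.

End Det2.


Section Prob.
Variables (R : realType) (n : nat) (adj : rel 'I_n) (phi : R)
  (d : measure_display) (Omega : measurableType d) (P : probability Omega R)
  (W : 'I_n * 'I_n -> Omega -> R) (f : 'I_n * 'I_n -> R -> R).
Hypothesis HW : forall e, e \in edges adj -> measurable_fun setT (W e).
Hypothesis Hmf : forall e, e \in edges adj -> measurable_fun setT (f e).
Hypothesis Hf : forall e, e \in edges adj -> forall x, 0 <= f e x <= phi.
Hypothesis Hd : forall e, e \in edges adj -> has_density_on_pm1 P (W e) (f e).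
Hypothesis Hi : mutually_independent P (edges adj) W.

Lemma pm1E : [set x : R | (-1 <= x <= 1)%R] = `[-1, 1]%classic.
Proof. by apply/seteqP; split=> x; rewrite /= in_itv. Qed.

Lemma Pitv e a b : e \in edges adj -> a <= b ->
  (P (W e @^-1` `[a, b]%classic) <= (phi * (b - a))%:E)%E.
Proof.
move=> eE ab; rewrite (Hd eE) ?measurable_itv //.
have mD : measurable (`[a, b]%classic `&` [set x : R | (-1 <= x <= 1)%R]).
  by rewrite pm1E; apply: measurableI; apply: measurable_itv.
have phi0 : 0 <= phi by have /andP[h1 h2] := Hf eE 0; apply: le_trans h2.
apply: (@le_trans _ _ (\int[lebesgue_measure]_(x in `[a, b]%classic `&` [set x : R | (-1 <= x <= 1)%R]) (cst phi%:E) x)%E).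
  apply: ge0_le_integral => //.
  - by move=> x _; rewrite lee_fin; case/andP: (Hf eE x).
  - apply: (@measurable_funS _ _ _ _ setT) => //.
    by apply/measurable_EFinP; apply: Hmf.
  - by move=> x _; rewrite lee_fin; case/andP: (Hf eE x).
rewrite integral_cst // EFinM; apply: lee_wpmul2l; first by rewrite lee_fin.
apply: (@le_trans _ _ (lebesgue_measure (`[a, b]%classic : set R))).
  by apply: le_measure; rewrite ?inE //; apply: measurable_itv.
rewrite lebesgue_measure_itv /=; case: ifP => _ //.
by rewrite lee_fin subr_ge0.
Qed.
End Prob.


Section Cells.
Variables (R : realType) (K : nat).
Definition dl : R := 2 / K.+1%:R.
Definition ell (i : nat) : R := -1 + i%:R * dl.
Definition cellb (i : 'I_K.+1) (x : R) : bool :=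
  ((i == 0 :> nat) || (ell i <= x)) && ((i == K :> nat) || (x < ell i.+1)).
Definition cell (i : 'I_K.+1) : set R := [set x | cellb i x].

Lemma dl_gt0 : 0 < dl.
Proof. by rewrite /dl divr_gt0 // ltr0n. Qed.

Lemma ell_mono i j : (i <= j)%N -> ell i <= ell j.
Proof. by move=> ij; rewrite /ell lerD2l ler_wpM2r ?ler_nat // ltW // dl_gt0. Qed.

Lemma ellS i : ell i.+1 = ell i + dl.
Proof. by rewrite /ell -addn1 natrD mulrDl mul1r addrA. Qed.

Lemma ellK : ell K + dl = 1.
Proof.
rewrite -ellS /ell /dl mulrCA mulfV ?mulr1 ?pnatr_eq0 //; lra.
Qed.

Lemma cell_meas i : measurable (cell i).
Proof.
have -> : cell i = (if (i == 0 :> nat) then setT else `[ell i, +oo[%classic) `&`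
   (if (i == K :> nat) then setT else `]-oo, ell i.+1[%classic).
  rewrite /cell /cellb; apply/seteqP; split => x /=;
  case: (i == 0 :> nat); case: (i == K :> nat); rewrite /= ?in_itv /= ?andbT ?andTb.
  all: try done.
  - by move/andP.
  - by case.
  - by case.
  - by case=> -> ->.
by apply: measurableI; case: ifP => _ //; apply: measurable_itv.
Qed.

Lemma cell_disj i j : i != j -> cell i `&` cell j = set0.
Proof.
wlog ij : i j / (i < j)%N.
  move=> H; rewrite neq_ltn => /orP[h|h]; first by apply: H => //; rewrite neq_ltn h.
  by rewrite setIC; apply: H => //; rewrite neq_ltn h.
move=> _; apply/seteqP; split => x // [] /andP[_ hi] /andP[hj _].
have iK : (i == K :> nat) = false.
  by apply: ltn_eqF; apply: leq_trans ij _; rewrite -ltnS.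
have j0 : (j == 0 :> nat) = false by apply/negbTE; rewrite -lt0n (leq_ltn_trans _ ij).
rewrite iK j0 /= in hi hj.
have := ell_mono ij; lra.
Qed.

Lemma cell_cover x : exists i, cellb i x.
Proof.
have ex : exists k, (k <= K)%N && ((k == 0)%N || (ell k <= x)) by exists 0%N.
have bnd : forall k, (k <= K)%N && ((k == 0)%N || (ell k <= x)) -> (k <= K)%N.
  by move=> k /andP[].
case: (ex_maxnP ex bnd) => i /andP[iK hi] imax.
exists (Ordinal (iK : (i < K.+1)%N)); rewrite /cellb /= hi /=.
case: (eqVneq i K) => //= iK'.
have : ~~ ((i.+1 <= K)%N && ((i.+1 == 0)%N || (ell i.+1 <= x))).
  by apply/negP => /imax; rewrite ltnn.
have -> : (i.+1 <= K)%N by rewrite ltn_neqAle iK' iK.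
by rewrite /= -ltNge.
Qed.

Definition cidx (x : R) : 'I_K.+1 := xchoose (cell_cover x).
Lemma cidxP x : cellb (cidx x) x.
Proof. exact: (xchooseP (cell_cover x)). Qed.

Lemma cell_near i x : -1 <= x <= 1 -> cellb i x -> ell i <= x <= ell i + dl.
Proof.
move=> /andP[x1 x2] /andP[h1 h2]; apply/andP; split.
  case/orP: h1 => // /eqP i0; rewrite /ell i0 mul0r addr0 //.
case/orP: h2 => [/eqP iK|h]; first by rewrite iK ellK.
by rewrite -ellS ltW.
Qed.
End Cells.


Lemma bigsetI_in (T I : Type) (r : seq I) (p : pred I) (F : I -> set T) x :
  (forall i, p i -> F i x) -> (\big[setI/setT]_(i <- r | p i) F i) x.
Proof.
move=> H; elim: r => [|h r IH]; rewrite ?big_nil ?big_cons //.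
by case: ifP => // ph; split => //; apply: H.
Qed.

Lemma bigsetU_in (T : Type) (I : eqType) (r : seq I) (p : pred I) (F : I -> set T) x i :
  i \in r -> p i -> F i x -> (\big[setU/set0]_(i <- r | p i) F i) x.
Proof.
move=> ir pi Fi; elim: r ir => [|h r IH] //; rewrite in_cons big_cons.
case/orP => [/eqP <-|/IH h']; first by rewrite pi; left.
by case: ifP => _ //; right.
Qed.

Lemma subadd d (T : measurableType d) (R : realType) (mu : {measure set T -> \bar R})
  (I : Type) (r : seq I) (p : pred I) (F : I -> set T) :
  (forall i, p i -> measurable (F i)) ->
  (mu (\big[setU/set0]_(i <- r | p i) F i) <= \sum_(i <- r | p i) mu (F i))%E.
Proof.
move=> mF; elim: r => [|h r IH]; first by rewrite !big_nil measure0.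
rewrite !big_cons; case: ifP => // ph.
apply: le_trans (measureU2 _ _ _) _ => //; first exact: mF.
  by apply: bigsetU_measurable => i /mF.
by apply: leeD.
Qed.

Lemma Pfine d (T : measurableType d) (R : realType) (P : probability T R) A :
  measurable A -> P A = (fine (P A))%:E.
Proof.
move=> mA; rewrite fineK // ge0_fin_numE //.
by apply: le_lt_trans (probability_le1 P mA) _; rewrite ltry.
Qed.

Section VD.
Variables (R : realType) (n : nat) (adj : rel 'I_n) (phi : R)
  (d : measure_display) (Omega : measurableType d) (P : probability Omega R)
  (W : 'I_n * 'I_n -> Omega -> R) (f : 'I_n * 'I_n -> R -> R).
Hypothesis HW : forall e, e \in edges adj -> measurable_fun setT (W e).
Hypothesis Hmf : forall e, e \in edges adj -> measurable_fun setT (f e).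
Hypothesis Hf : forall e, e \in edges adj -> forall x, 0 <= f e x <= phi.
Hypothesis Hd : forall e, e \in edges adj -> has_density_on_pm1 P (W e) (f e).
Hypothesis Hi : mutually_independent P (edges adj) W.
Variables (K : nat) (eps : R) (v : 'I_n) (e0 : 'I_n * 'I_n) (D : {set 'I_n * 'I_n}).
Hypothesis e0v : e0 \in inc adj v.

Lemma mpre e A : e \in edges adj -> measurable A -> measurable (W e @^-1` A).
Proof. by move=> eE mA; rewrite -[X in measurable X]setTI; apply: (HW eE). Qed.

Definition Oth := inc adj v :\ e0.
Definition sg (e : 'I_n * 'I_n) : R := if e \in D then -1 else 1.
Definition yc (c : {ffun 'I_n * 'I_n -> 'I_K.+1}) : R :=
  \sum_(e in Oth) sg e * ell R K (c e).
Definition muK : R := #|Oth|%:R * dl R K.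
Definition ac c : R := if e0 \in D then yc c - eps - muK else - yc c - muK.
Definition Ic c : set R := `[ac c, ac c + (eps + 2 * muK)]%classic.
Definition Ac c (i : 'I_n * 'I_n) : set R :=
  if i == e0 then Ic c else if i \in Oth then @cell R K (c i) else setT.
Definition Qs c : set Omega := \big[setI/setT]_(i in edges adj) (W i @^-1` Ac c i).
Definition BvD : set Omega :=
  \big[setU/set0]_(c in pffun_on ord0 (fun e => e \in Oth) predT) Qs c.

Lemma incE e : e \in inc adj v -> e \in edges adj.
Proof. by rewrite inE => /andP[]. Qed.
Lemma e0E : e0 \in edges adj.
Proof. exact: incE. Qed.
Lemma OthE e : e \in Oth -> e \in edges adj.
Proof. by rewrite /Oth in_setD1 => /andP[_ /incE]. Qed.
Lemma Oth_ne e : e \in Oth -> e != e0.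
Proof. by rewrite /Oth in_setD1 => /andP[]. Qed.

Lemma gain_split (w : 'I_n * 'I_n -> R) :
  gain adj w v D = sg e0 * w e0 + \sum_(e in Oth) sg e * w e.
Proof.
rewrite /gain (bigD1 e0) //=; congr (_ + _).
  by rewrite /sg; case: ifP => _; rewrite ?mulN1r ?mul1r.
apply: eq_big => e; first by rewrite /Oth in_setD1 andbC.
by rewrite /sg; case: ifP => _; rewrite ?mulN1r ?mul1r.
Qed.

Lemma Ac_meas c i : measurable (Ac c i).
Proof.
rewrite /Ac; case: ifP => _; first exact: measurable_itv.
by case: ifP => _ //; apply: cell_meas.
Qed.

Lemma Qs_meas c : measurable (Qs c).
Proof.
by apply: bigsetI_measurable => i iE; apply: mpre => //; apply: Ac_meas.
Qed.

Lemma BvD_contains (om : Omega) :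
  (forall e, e \in edges adj -> -1 <= W e om <= 1) ->
  0 < gain adj (fun e => W e om) v D <= eps -> BvD om.
Proof.
move=> wb /andP[g0 g1].
pose c := [ffun e => if e \in Oth then cidx K (W e om) else ord0].
apply: (@bigsetU_in _ _ _ _ _ _ c); first by rewrite mem_index_enum.
  apply/pffun_onP; split; last by move=> y _.
  change (ord0.-support c \subset Oth).
  apply/fintype.subsetP => e; rewrite inE /c ffunE; case: ifP => // _; by rewrite eqxx.
apply: bigsetI_in => i iE; rewrite /Ac; case: eqP => [->|ne]; last first.
  by case: ifP => iO //; rewrite /c ffunE iO; exact: cidxP.
have hY : `| \sum_(e in Oth) sg e * W e om - yc c | <= muK.
  rewrite /yc -sumrB; apply: le_trans (ler_norm_sum _ _ _) _.
  rewrite /muK mulr_natl -sumr_const; apply: ler_sum => e eO.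
  have cc : cellb (c e) (W e om) by rewrite /c ffunE eO; exact: cidxP.
  have := cell_near (wb e (OthE eO)) cc.
  rewrite -mulrBr normrM /sg; case: ifP => _; rewrite ?normrN normr1 mul1r;
  move=> /andP[h1 h2]; rewrite ger0_norm; lra.
move: g0 g1; rewrite gain_split /Ic /= in_itv /= /ac /sg.
move: hY; set Y := \sum_(e in Oth) _; rewrite ler_norml => /andP[h1 h2].
have m0 : 0 <= muK by rewrite /muK mulr_ge0 // ltW // dl_gt0.
case: ifP => _ g0 g1; apply/andP; split; lra.
Qed.

Lemma sum_cells e : e \in edges adj ->
  \sum_(j < K.+1) fine (P (W e @^-1` @cell R K j)) <= 1.
Proof.
move=> eE; rewrite -lee_fin -sumEFin.
rewrite (eq_bigr (fun j => P (W e @^-1` @cell R K j))); last first.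
  by move=> j _; rewrite -Pfine //; apply: mpre => //; apply: cell_meas.
rewrite -measure_bigsetU_ord.
- apply: probability_le1; apply: bigsetU_measurable => j _.
  by apply: mpre => //; apply: cell_meas.
- by move=> j; apply: mpre => //; apply: cell_meas.
- apply/trivIsetP => a b _ _ ab.
  by rewrite -preimage_setI cell_disj // preimage_set0.
Qed.

Lemma P_Qs c : P (Qs c) =
  (P (W e0 @^-1` Ic c) * \prod_(i in Oth) P (W i @^-1` @cell R K (c i)))%E.
Proof.
rewrite /Qs Hi; last by move=> i; apply: Ac_meas.
rewrite (bigD1 e0) /=; last exact: e0E.
rewrite /Ac eqxx; congr (_ * _)%E.
rewrite (bigID (fun i => i \in Oth)) /= [X in (_ * X)%E]big1 ?mule1; last first.
  move=> i /andP[/andP[_ ne] iO]; rewrite (negbTE ne) (negbTE iO).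
  by rewrite preimage_setT probability_setT.
apply: eq_big => i.
  case iO: (i \in Oth); rewrite ?andbF // andbT.
  by rewrite (OthE iO) (Oth_ne iO).
by move=> /andP[/andP[_ ne] iO]; rewrite (negbTE ne) iO.
Qed.

Lemma P_BvD : 0 <= eps ->
  (P BvD <= (phi * (eps + 2 * muK))%:E)%E.
Proof.
move=> ep; have m0 : 0 <= muK by rewrite /muK mulr_ge0 // ltW // dl_gt0.
have phi0 : 0 <= phi by have /andP[h1 h2] := Hf e0E 0; apply: le_trans h2.
set x := phi * (eps + 2 * muK).
have x0 : 0 <= x by rewrite /x mulr_ge0 //; lra.
pose p i j := fine (P (W i @^-1` @cell R K j)).
rewrite /BvD; apply: le_trans; first (apply: subadd => c _; apply: Qs_meas).
apply: (@le_trans _ _ (\sum_(c in pffun_on ord0 (fun e => e \in Oth) predT)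
          (x * \prod_(i in Oth) p i (c i))%:E)%E).
  apply: lee_sum => c _; rewrite -[X in (X <= _)%E]/(P (Qs c)) (P_Qs c) EFinM.
  have -> : (\prod_(i in Oth) P (W i @^-1` @cell R K (c i)) =
             (\prod_(i in Oth) p i (c i))%:E)%E.
    rewrite -prodEFin; apply: eq_bigr => i iO.
    by rewrite -Pfine //; apply: mpre; [apply: OthE | apply: cell_meas].
  apply: lee_wpmul2r; first by rewrite lee_fin prodr_ge0 // => i _; apply: fine_ge0.
  have hab : ac c <= ac c + (eps + 2 * muK) by rewrite lerDl; lra.
  apply: le_trans (Pitv Hmf Hf Hd e0E hab) _.
  by rewrite lee_fin /x [ac c + _]addrC addrK.
rewrite sumEFin lee_fin -mulr_sumr -(big_distr_big ord0) /=.
rewrite -[leRHS]mulr1 ler_wpM2l //; apply: prodr_ile1 => i iO.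
apply/andP; split; first by apply: sumr_ge0 => j _; apply: fine_ge0.
by rewrite /p; apply: le_trans (sum_cells (OthE iO)); rewrite big_mkcond /=.
Qed.

End VD.


Lemma gain_setI (R : realType) n (adj : rel 'I_n) (w : 'I_n * 'I_n -> R) v D :
  gain adj w v (D :&: inc adj v) = gain adj w v D.
Proof. by apply: eq_bigr => e ev; rewrite inE ev andbT. Qed.

Section Big.
Variables (R : realType) (n : nat) (adj : rel 'I_n) (phi : R)
  (d : measure_display) (Omega : measurableType d) (P : probability Omega R)
  (W : 'I_n * 'I_n -> Omega -> R) (f : 'I_n * 'I_n -> R -> R).
Hypothesis HW : forall e, e \in edges adj -> measurable_fun setT (W e).
Hypothesis Hmf : forall e, e \in edges adj -> measurable_fun setT (f e).
Hypothesis Hf : forall e, e \in edges adj -> forall x, 0 <= f e x <= phi.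
Hypothesis Hd : forall e, e \in edges adj -> has_density_on_pm1 P (W e) (f e).
Hypothesis Hi : mutually_independent P (edges adj) W.
Variables (K : nat) (eps : R).

Definition Bv v : set Omega :=
  if [pick e in inc adj v] is Some e0 then
    \big[setU/set0]_(D in powerset (inc adj v)) BvD adj W K eps v e0 D
  else set0.
Definition Out : set Omega :=
  \big[setU/set0]_(e in edges adj) (W e @^-1` (~` `[-1, 1]%classic)).
Definition Bset : set Omega := Out `|` \big[setU/set0]_(v : 'I_n) Bv v.
Definition Sn : nat := (\sum_(v : 'I_n)
  (if [pick e in inc adj v] is Some _ then 2 ^ #|inc adj v| else 0))%N.

Lemma BvD_meas v e0 D : measurable (BvD adj W K eps v e0 D).
Proof. by apply: bigsetU_measurable => c _; apply: (Qs_meas HW). Qed.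

Lemma Bv_meas v : measurable (Bv v).
Proof.
rewrite /Bv; case: pickP => // e0 _.
by apply: bigsetU_measurable => D _; apply: BvD_meas.
Qed.

Lemma Out_meas : measurable Out.
Proof.
apply: bigsetU_measurable => e eE; apply: (mpre HW eE).
by apply: measurableC; apply: measurable_itv.
Qed.

Lemma Bset_meas : measurable Bset.
Proof.
apply: measurableU; first exact: Out_meas.
by apply: bigsetU_measurable => v _; apply: Bv_meas.
Qed.

Lemma P_Out : (P Out <= 0)%E.
Proof.
apply: le_trans; first (apply: subadd => e eE; apply: (mpre HW eE);
  by apply: measurableC; apply: measurable_itv).
rewrite big1 // => e eE.
rewrite -[LHS]/(P (W e @^-1` (~` `[-1, 1]%classic))) (Hd eE); last by apply: measurableC; apply: measurable_itv.
by rewrite pm1E setICl integral_set0.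
Qed.

Lemma P_Bv v : 0 <= eps ->
  (P (Bv v) <= (if [pick e in inc adj v] is Some _ then
     (2 ^ #|inc adj v|)%:R * (phi * (eps + 2 * #|edges adj|%:R * dl R K)) else 0)%:E)%E.
Proof.
move=> ep; rewrite /Bv; case: pickP => [e0 e0v|_]; last by rewrite measure0.
apply: le_trans; first (apply: subadd => D _; apply: BvD_meas).
apply: le_trans; first (apply: lee_sum => D _; exact: (P_BvD HW Hmf Hf Hd Hi K D e0v ep)).
rewrite sumEFin sumr_const card_powerset lee_fin -[leLHS]mulr_natr mulrC.
have e0E : e0 \in edges adj by move: e0v; rewrite inE => /andP[].
have phi0 : 0 <= phi by have /andP[h1 h2] := Hf e0E 0; apply: le_trans h2.
rewrite ler_wpM2l // ler_wpM2l // lerD2l.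
rewrite -mulrA ler_pM2l // /muK (ler_wpM2r (ltW (dl_gt0 R K))) // ler_nat.
apply: subset_leq_card; apply/fintype.subsetP => e.
by rewrite /Oth in_setD1 inE => /andP[_ /andP[]].
Qed.

Lemma P_B : 0 <= eps ->
  (P Bset <= (Sn%:R * (phi * (eps + 2 * #|edges adj|%:R * dl R K)))%:E)%E.
Proof.
move=> ep; apply: le_trans.
  apply: measureU2; first exact: Out_meas.
  by apply: bigsetU_measurable => v _; apply: Bv_meas.
apply: le_trans; first by apply: leeD; [apply: P_Out | apply: subadd => v _; apply: Bv_meas].
rewrite add0e; apply: le_trans; first by apply: lee_sum => v _; apply: P_Bv.
rewrite sumEFin lee_fin /Sn natr_sum mulr_suml; apply: ler_sum => v _.
by case: pickP => _ //; rewrite mul0r.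
Qed.

Lemma notB (om : Omega) : ~ Bset om ->
  (forall e, e \in edges adj -> -1 <= W e om <= 1) /\
  (forall v D, ~~ ((0 < gain adj (fun e => W e om) v D) &&
                   (gain adj (fun e => W e om) v D <= eps))).
Proof.
move=> nB.
have wb : forall e, e \in edges adj -> -1 <= W e om <= 1.
  move=> e eE; case: (boolP (-1 <= W e om <= 1)) => // h; exfalso; apply: (nB); left.
  apply: (@bigsetU_in _ _ _ _ _ _ e) => //.
  by rewrite /preimage /setC /= in_itv /= (negbTE h).
split => // v D; apply/negP => /andP[g0 g1]; apply: (nB); right.
apply: (@bigsetU_in _ _ _ _ _ _ v); rewrite ?mem_index_enum //.
rewrite /Bv; case: (pickP (mem (inc adj v))) => [e0 e0v|none]; last first.
  by move: g0; rewrite /gain big_pred0 ?ltxx // => e; rewrite none.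
apply: (@bigsetU_in _ _ _ _ _ _ (D :&: inc adj v)); rewrite ?mem_index_enum //.
  by rewrite powersetE subsetIr.
apply: BvD_contains => //.
by rewrite gain_setI g0 g1.
Qed.

End Big.


Lemma le_int0 d (T : measurableType d) (R : realType) (mu : {measure set T -> \bar R})
  (F G : T -> \bar R) : (forall x, (0 <= F x)%E) -> (forall x, (F x <= G x)%E) ->
  (\int[mu]_(x in setT) F x <= \int[mu]_(x in setT) G x)%E.
Proof.
move=> F0 FG; rewrite !ge0_integralTE //; last by move=> x; apply: le_trans (FG x).
apply: ereal_sup_le => _ [h hF <-]; exists h => //= x.
by apply: le_trans (hF x) (FG x).
Qed.

Section Count.
Variables (n : nat) (adj : rel 'I_n).
Hypothesis Hsg : simple_graph adj.

Lemma inc_deg v : (#|inc adj v| <= max_degree adj)%N.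
Proof.
case: Hsg => sym irr.
pose g (e : 'I_n * 'I_n) := if e.1 == v then e.2 else e.1.
apply: (@leq_trans #|[set u | adj v u]%SET|); last by rewrite /max_degree; exact: (@leq_bigmax _ (fun v => #|[set u | adj v u]%SET|) v).
rewrite -(@card_in_imset _ _ g); last first.
  move=> [a b] [a' b']; rewrite !inE /g /= => /andP[/andP[_ ab] h] /andP[/andP[_ ab'] h'].
  case: (eqVneq a v) => [av|av]; case: (eqVneq a' v) => [av'|av'] => /= e.
  - by rewrite av av' e.
  - have bv' : b' = v by move: h'; rewrite (negbTE av') => /eqP.
    by move: ab ab'; rewrite av e bv' => h1 h2; move: h1; rewrite ltnNge (ltnW h2).
  - have bv : b = v by move: h; rewrite (negbTE av) => /eqP.
    by move: ab ab'; rewrite av' -e bv => h1 h2; move: h1; rewrite ltnNge (ltnW h2).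
  - have bv' : b' = v by move: h'; rewrite (negbTE av') => /eqP.
    have bv : b = v by move: h; rewrite (negbTE av) => /eqP.
    by rewrite e bv bv'.
apply: subset_leq_card; apply/fintype.subsetP => u /imsetP[[a b]].
rewrite !inE /g /= => /andP[/andP[ab _] h] ->.
case: (eqVneq a v) h => [<- //|av /= /eqP bv].
by rewrite sym -bv.
Qed.

Lemma Sn_bound : (Sn adj <= 2 ^ max_degree adj * (2 * #|edges adj|))%N.
Proof.
set V' := [set e.1 | e in edges adj] :|: [set e.2 | e in edges adj].
have cV : (#|V'| <= 2 * #|edges adj|)%N.
  apply: leq_trans (leq_card_setU _ _) _.
  by rewrite mul2n -addnn leq_add // leq_imset_card.
apply: (@leq_trans (\sum_(v in V') 2 ^ max_degree adj)); last first.
  by rewrite sum_nat_const mulnC leq_mul2l cV orbT.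
rewrite /Sn [X in (_ <= X)%N]big_mkcond /=; apply: leq_sum => v _.
case: pickP => [e0 e0v|//].
have -> : v \in V'.
  move: e0v; rewrite inE => /andP[eE /orP[/eqP h|/eqP h]]; rewrite inE.
    by apply/orP; left; apply/imsetP; exists e0.
  by apply/orP; right; apply/imsetP; exists e0.
by rewrite leq_exp2l // inc_deg.
Qed.
End Count.


End Helpers.
Import Helpers.

Theorem mainTheorem11 (R : realType) :
  exists C : R, forall (n : nat) (adj : rel 'I_n) (phi : R)
    (d : measure_display) (Omega : measurableType d) (P : probability Omega R)
    (W : 'I_n * 'I_n -> Omega -> R) (f : 'I_n * 'I_n -> R -> R),
    simple_graph adj ->
    (forall e, e \in edges adj -> measurable_fun setT (W e)) ->
    (forall e, e \in edges adj -> measurable_fun setT (f e)) ->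
    (forall e, e \in edges adj -> forall x, 0 <= f e x <= phi) ->
    (forall e, e \in edges adj -> has_density_on_pm1 P (W e) (f e)) ->
    mutually_independent P (edges adj) W ->
    (\int[P]_(x in setT) ((max_flip_iterations adj (fun e => W e x))%:R : R)%:E
      <= (C * 2 ^+ max_degree adj * n%:R * (#|edges adj|%:R) ^+ 2 * phi)%:E)%E.
Proof.
exists 40 => n adj phi d Omega P W f Hsg HW Hmf Hf Hd Hi.
set m := #|edges adj|.
pose T x := max_flip_iterations adj (fun e => W e x).
pose K j := (2 ^ j).-1%N.
pose eps j : R := (4 * m + 1)%:R / (2 ^ j)%:R.
pose B j := Bset adj W (K j) (eps j).
have hK j : (K j).+1 = (2 ^ j)%N by rewrite /K prednK // expn_gt0.
have q0 j : 0 < (2 ^ j)%:R :> R by rewrite ltr0n expn_gt0.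
have ep j : 0 < eps j by rewrite /eps divr_gt0 // ltr0n.
have key x j : (2 ^ j <= T x)%N -> B j x.
  move=> h; apply: contrapT => nB.
  have [wb ng] := notB nB.
  have lt : 2 * m%:R < (2 ^ j)%:R * eps j.
    rewrite /eps mulrCA mulfV ?mulr1 ?gt_eqF // natrD natrM.
    have : 0 <= m%:R :> R by [].
    lra.
  by move: (no_long wb ng (ep j) lt); rewrite h.
have pt x : ((T x)%:R : R) <= \sum_(j < n.+1) (2 ^ j)%:R * \1_(B j) x.
  have hT : (T x < 2 ^ n.+1)%N.
    by apply: leq_ltn_trans (mfi_le _ _) _; rewrite ltn_exp2l.
  apply: (@le_trans _ _ ((\sum_(j < n.+1) 2 ^ j * (2 ^ j <= T x))%N)%:R).
    by rewrite ler_nat; exact: (dyadic hT).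
  rewrite natr_sum; apply: ler_sum => j _; rewrite natrM indicE ler_wpM2l //.
  case: leqP => h //=; rewrite ler_nat.
  by have := key x j h => Bx; rewrite mem_set.
have Bm j : measurable (B j) by apply: (Bset_meas HW).
apply: le_trans.
  apply: (@le_int0 _ _ _ P (fun x => ((T x)%:R : R)%:E)
                  (fun x => (\sum_(j < n.+1) (2 ^ j)%:R * \1_(B j) x)%:E)).
    by move=> x; rewrite lee_fin.
  by move=> x; rewrite lee_fin; apply: pt.
have -> : (\int[P]_(x in setT) (\sum_(j < n.+1) (2 ^ j)%:R * \1_(B j) x)%:E =
   \int[P]_(x in setT) \sum_(j < n.+1) ((2 ^ j)%:R * \1_(B j) x)%:E)%E.
  by apply: eq_integral => x _; rewrite sumEFin.
rewrite ge0_integral_sum //; last first.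
  move=> j; apply/measurable_EFinP; apply: measurable_funM => //.
set Z : R := (Sn adj)%:R * (phi * (8 * m%:R + 1)).
apply: (@le_trans _ _ (\sum_(j < n.+1) Z%:E)%E).
  apply: lee_sum => j _.
  under eq_integral do rewrite EFinM.
  rewrite ge0_integralZl //; last first.
    by apply/measurable_EFinP; exact: measurable_indic.
  rewrite integral_indic // setIT.
  apply: le_trans.
    apply: lee_wpmul2l; first by rewrite lee_fin.
    exact: (P_B HW Hmf Hf Hd Hi (K j) (ltW (ep j))).
  rewrite -EFinM lee_fin le_eqVlt; apply/orP; left; apply/eqP.
  rewrite /Z /dl hK /eps.
  have := q0 j; move: ((2 ^ j)%:R : R) => q q0'.
  field; by rewrite gt_eqF.
rewrite sumEFin sumr_const card_ord lee_fin /Z.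
case: (posnP m) => [m0|mpos].
  have Sn0 : Sn adj = 0%N.
    rewrite /Sn big1 // => v _; case: pickP => // e; rewrite inE => /andP[eE _].
    by move: eE; rewrite (cards0_eq m0) inE.
  by rewrite Sn0 m0 !mul0r mul0rn expr0n /= mulr0 !mul0r.
have [e eE] : exists e, e \in edges adj by apply/card_gt0P.
have phi0 : 0 <= phi by have /andP[h1 h2] := Hf e eE 0; apply: le_trans h2.
have n0 : (0 < n)%N by apply: leq_ltn_trans (leq0n _) (ltn_ord e.1).
have hS : (Sn adj)%:R <= 2 ^+ max_degree adj * (2 * m%:R) :> R.
  by rewrite -natrX -[2]/(2%:R) -natrM -natrM ler_nat Sn_bound.
set S := (Sn adj)%:R; set N := n%:R; set M := m%:R; set D := 2 ^+ max_degree adj.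
have -> : (S * (phi * (8 * M + 1))) *+ n.+1 = S * (phi * (8 * M + 1)) * (N + 1).
  by rewrite /N natr1 mulr_natr.
have hM : 1 <= M by rewrite /M ler1n.
have hN : 1 <= N by rewrite /N ler1n.
have D0 : 0 <= D by rewrite /D exprn_ge0.
have S0 : 0 <= S by rewrite /S.
have h1 : S * (8 * M + 1) <= (D * (2 * M)) * (9 * M).
  by apply: ler_pM => //; lra.
have h2 : S * (8 * M + 1) * (N + 1) <= (D * (2 * M)) * (9 * M) * (2 * N).
  apply: ler_pM => //; try lra.
  by apply: mulr_ge0 => //; lra.
have -> : S * (phi * (8 * M + 1)) * (N + 1) = phi * (S * (8 * M + 1) * (N + 1)) by ring.
have -> : 40 * D * N * M ^+ 2 * phi = phi * (40 * (D * N * M ^+ 2)) by ring.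
rewrite ler_wpM2l //; apply: le_trans h2 _.
have -> : D * (2 * M) * (9 * M) * (2 * N) = 36 * (D * N * M ^+ 2) by ring.
rewrite ler_wpM2r //; last lra.
by rewrite !mulr_ge0 // ?exprn_ge0 //; lra.
Qed.
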